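(* For all $t\ge0$ and $\tau>0$, the function $u\mapsto\Xi(u,t,\tau)$ is convex and essentially smooth on $\mathcal{K}_{t,\tau}$.
   Context: Parameters $v,\xi>0$, $\rho\in(-1,1)$, $\bar\rho:=\sqrt{1-\rho^2}$. $\Xi(u,t,\tau):=\frac{uv}{\xi(\bar\rho\cot(\frac12\xi\bar\rho\tau u)-\rho)-\frac12\xi^2tu}$ with $\Xi(0,t,\tau):=0$; $\mathcal{K}_{t,\tau}$ is the connected component containing $0$ of $\{u\in\mathbb{R}:\Xi(u,0,\tau)<\frac{2v}{\xi^2t}\}$ ($2v/(\xi^2t):=+\infty$ if $t=0$). A convex function $h$ on an interval is essentially smooth if its interior is nonempty, $h$ is differentiable there, and $|h'(u_n)|\to\infty$ for every sequence $u_n$ in the interior converging to a boundary point. *)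

(* Defs.v *)
From HB Require Import structures.
From mathcomp Require Import all_boot all_order all_algebra.
From mathcomp Require Import all_classical all_reals all_analysis.
Set Implicit Arguments. Unset Strict Implicit. Unset Printing Implicit Defensive.
Import Order.TTheory GRing.Theory Num.Theory.
Import numFieldNormedType.Exports.
Local Open Scope classical_set_scope.
Local Open Scope ring_scope.

Section Defs.
Variable R : realType.

Definition cot (x : R) : R := cos x / sin x.

Definition rhobar (rho : R) : R := Num.sqrt (1 - rho ^+ 2).

Definition Xi_arg (xi rho tau u : R) : R := xi * rhobar rho * tau * u / 2.

Definition Xi_den (xi rho u t tau : R) : R :=
  xi * (rhobar rho * cot (Xi_arg xi rho tau u) - rho) - xi ^+ 2 * t * u / 2.

Definition Xi (v xi rho u t tau : R) : R :=
  if u == 0 then 0 else u * v / Xi_den xi rho u t tau.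

Definition Xi_defined (xi rho u t tau : R) : Prop :=
  u = 0 \/ (sin (Xi_arg xi rho tau u) != 0 /\ Xi_den xi rho u t tau != 0).

(* {u : Xi(u,0,tau) < 2v/(xi^2 t)}, with 2v/(xi^2 t) = +oo when t = 0 *)
Definition K_set (v xi rho t tau : R) : set R :=
  [set u | Xi_defined xi rho u 0 tau /\
           (t = 0 \/ Xi v xi rho u 0 tau < 2 * v / (xi ^+ 2 * t))].

Definition K_tt (v xi rho t tau : R) : set R :=
  connected_component (K_set v xi rho t tau) 0.

Definition essentially_smooth (D : set R) (h : R -> R) : Prop :=
  [/\ interior D !=set0,
      (forall x, interior D x -> derivable h x 1) &
      (forall (u : R ^nat) (b : R),
         (forall n, interior D (u n)) ->
         u @ \oo --> b ->
         (closure D `\` interior D) b ->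
         (fun n => `| derive1 h (u n) |) @ \oo --> +oo)].

End Defs.

(* Main.v *)
Require Import Defs.
From HB Require Import structures.
From mathcomp Require Import all_boot all_order all_algebra.
From mathcomp Require Import all_classical all_reals all_analysis.
From mathcomp Require Import ring lra.
Import Order.TTheory GRing.Theory Num.Theory.
Import numFieldNormedType.Exports.
Local Open Scope classical_set_scope.
Local Open Scope ring_scope.

Lemma ycos_le_sin (R : realType) (y : R) : 0 <= y <= pi/2 -> y * cos y <= sin y.
Proof.
move=> /andP[y0 y1].
pose g := fun y : R => sin y - y * cos y.
have dg (x : R) : is_derive x (1:R) g (x * sin x).
  rewrite /g; apply: is_derive_eq.
  by rewrite [_%:A]mulr1 -[x *: _]/(x * - sin x); ring.
have H : g 0 <= g y.
  apply: (@ger0_derive1_ndecr R g 0 (pi/2)) => //.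
  - move=> x; rewrite in_itv /= => /andP[x0 x1]; rewrite derive1E (@derive_val _ _ _ _ _ _ _ (dg x)).
    apply: mulr_ge0; first exact: ltW.
    apply: sin_ge0_pi; rewrite (ltW x0) /=; apply: (le_trans (ltW x1)).
    by rewrite ler_pdivrMr // ler_peMr ?pi_ge0 // ler1n.
  - apply: continuous_subspaceT => x.
    exact/differentiable_continuous/derivable1_diffP/(@ex_derive _ _ _ _ _ _ _ (dg x)).
move: H; rewrite /g sin0 mul0r subr0 subr_ge0 => //.
Qed.

Lemma key_ineq (R : realType) (P th : R) :
  -(pi/2) < P < pi/2 -> -(pi/2) < th < pi/2 -> 0 <= cos P + (P - th) * sin P.
Proof.
move=> /andP[P1 P2] /andP[t1 t2].
have pi0 : 0 < pi :> R := pi_gt0 R.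
have [P0|P0] := leP 0 P.
- set y := pi/2 - P.
  have hc : sin y = cos P by rewrite /y sinB cos_pihalf sin_pihalf; ring.
  have hs : cos y = sin P by rewrite /y cosB cos_pihalf sin_pihalf; ring.
  have sP : 0 <= sin P.
    apply: sin_ge0_pi; rewrite P0 /=; lra.
  have := @ycos_le_sin R y.
  rewrite /y; move=> H; have {H} H : (pi/2 - P) * cos y <= sin y by apply: H; lra.
  rewrite hc hs in H.
  have : (P - th - (P - pi/2)) * sin P >= 0 by apply: mulr_ge0 => //; lra.
  nra.
- set y := P + pi/2.
  have hc : cos P = sin y by rewrite /y -[P in LHS](addrK (pi/2)) cosBpihalf.
  have hs : sin P = - cos y by rewrite /y -[P in LHS](addrK (pi/2)) sinBpihalf.
  have sP : sin P <= 0.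
    rewrite -oppr_ge0 -sinN; apply: sin_ge0_pi; lra.
  have := @ycos_le_sin R y.
  rewrite /y; move=> H; have {H} H : (P + pi/2) * cos y <= sin y by apply: H; lra.
  rewrite -hc in H.
  have : (P + pi/2 - (P - th)) * (- sin P) >= 0 by apply: mulr_ge0 => //; lra.
  nra.
Qed.

Section Main.
Variables (R : realType) (v xi rho t tau : R).
Hypotheses (hv : 0 < v) (hxi : 0 < xi) (hrho1 : -1 < rho) (hrho2 : rho < 1)
  (ht : 0 <= t) (htau : 0 < tau).
Ltac hyps := have ?:= hv; have ?:= hxi; have ?:= hrho1; have ?:= hrho2;
  have ?:= ht; have ?:= htau.

Definition rb := rhobar rho.
Lemma rb_gt0 : 0 < rb.
Proof.
hyps.
have h : 0 < (1 - rho) * (1 + rho) by apply: mulr_gt0; lra.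
by rewrite /rb /rhobar sqrtr_gt0; nra. Qed.
Lemma rb2 : rb ^+ 2 = 1 - rho ^+ 2.
Proof.
hyps.
have h : 0 < (1 - rho) * (1 + rho) by apply: mulr_gt0; lra.
by rewrite /rb /rhobar sqr_sqrtr //; nra. Qed.

Definition th := asin rho.
Lemma sin_th : sin th = rho.
Proof. by rewrite /th asinK // in_itv /=; apply/andP; split; apply: ltW. Qed.
Lemma cos_th : cos th = rb.
Proof. by rewrite /th cos_asin //; apply/andP; split; apply: ltW. Qed.
Lemma th_gt : -(pi/2) < th.
Proof. by rewrite /th asin_gtNpi2 // hrho1 ltW. Qed.
Lemma th_lt : th < pi/2.
Proof. by rewrite /th asin_ltpi2 // hrho2 ltW. Qed.

Definition a := xi * rb * tau / 2.
Lemma a_gt0 : 0 < a.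
Proof. by rewrite /a divr_gt0 // !mulr_gt0 // rb_gt0. Qed.
Lemma Xi_argE u : Xi_arg xi rho tau u = a * u.
Proof. by rewrite /Xi_arg /a -/rb; field. Qed.

Definition p u := a * u + th.
Definition L0 := (- (pi/2) - th) / a.
Definition R0 := (pi/2 - th) / a.
Definition I0 u := L0 < u < R0.

Lemma I0P u : I0 u <-> -(pi/2) < p u < pi/2.
Proof.
have a0 := a_gt0.
rewrite /I0 /L0 /R0 /p ltr_pdivrMr // ltr_pdivlMr //.
by split => /andP[h1 h2]; apply/andP; split; lra.
Qed.

Lemma I0_0 : I0 0.
Proof. apply/I0P; rewrite /p mulr0 add0r th_gt th_lt. done. Qed.

Lemma cos_p_gt0 u : I0 u -> 0 < cos (p u).
Proof. by move/I0P; apply: cos_gt0_pihalf. Qed.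

Lemma sin_au u : sin (a * u) = rb * sin (p u) - rho * cos (p u).
Proof.
have -> : a * u = p u - th by rewrite /p; ring.
by rewrite sinB sin_th cos_th; ring.
Qed.

Lemma cos_pE u : cos (p u) = rb * cos (a * u) - rho * sin (a * u).
Proof. by rewrite /p cosD sin_th cos_th; ring. Qed.

Lemma usin_gt0 u : I0 u -> u != 0 -> 0 < u * sin (a * u).
Proof.
move=> /I0P /andP[h1 h2] u0.
have pi0 : 0 < pi :> R := pi_gt0 R.
have t1 := th_gt; have t2 := th_lt; have a0 := a_gt0.
have [ul|ug] := ltP u 0.
- have -> : u * sin (a * u) = (- u) * sin (- (a * u)) by rewrite sinN; ring.
  apply: mulr_gt0; first lra.
  apply: sin_gt0_pi; apply/andP; split; rewrite /p in h1 h2; nra.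
- have ug' : 0 < u by rewrite lt_neqAle eq_sym u0.
  apply: mulr_gt0 => //.
  apply: sin_gt0_pi; apply/andP; split; rewrite /p in h1 h2; nra.
Qed.

Lemma sin_au_ne0 u : I0 u -> u != 0 -> sin (a * u) != 0.
Proof.
move=> h u0; have := usin_gt0 u h u0.
by apply: contraTneq => ->; rewrite mulr0 ltxx.
Qed.

Definition X u := v / xi * (rb * (u * tan (p u)) - rho * u).

Lemma X_alt u : I0 u -> X u = v * u * sin (a * u) / (xi * cos (p u)).
Proof.
move=> h; have c0 := cos_p_gt0 u h.
rewrite /X /tan sin_au; field.
by rewrite !gt_eqF.
Qed.

Lemma X_ge0 u : I0 u -> 0 <= X u.
Proof.
move=> h; rewrite X_alt //.
have [->|u0] := eqVneq u 0; first by rewrite !(mulr0, mul0r).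
have := usin_gt0 u h u0; have := cos_p_gt0 u h => c0 us.
apply: divr_ge0; last by apply: mulr_ge0; apply: ltW.
by rewrite -mulrA; apply: mulr_ge0; apply: ltW.
Qed.

Lemma X0 : X 0 = 0.
Proof. by rewrite /X !(mul0r, mulr0, subr0). Qed.


Lemma dp u : is_derive u (1:R) p a.
Proof. rewrite /p; apply: is_derive_eq; rewrite /GRing.scale /=; ring. Qed.

Lemma dcos u : is_derive u (1:R) (fun z => cos (p z)) (- sin (p u) * a).
Proof.
have := @is_derive1_comp R cos p u _ _ (is_derive_cos (p u)) (dp u).
by [].
Qed.

Lemma dsin u : is_derive u (1:R) (fun z => sin (p z)) (cos (p u) * a).
Proof.
have := @is_derive1_comp R sin p u _ _ (is_derive_sin (p u)) (dp u).
by [].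
Qed.

Lemma dtan u : I0 u -> is_derive u (1:R) (fun z => tan (p z)) ((cos (p u))^-2 * a).
Proof.
move=> h; have c0 := cos_p_gt0 u h.
have cn : cos (p u) != 0 by rewrite gt_eqF.
have := @is_derive1_comp R tan p u _ _ (is_derive_tan cn) (dp u).
by [].
Qed.

Definition X1 u := v / xi * (rb * (tan (p u) + u * (a * (cos (p u) ^+ 2)^-1)) - rho).
Definition X2 u := v / xi * rb * (2 * a * (cos (p u) ^+ 2)^-1) * (1 + a * u * tan (p u)).

Lemma dX u : I0 u -> is_derive u (1:R) X (X1 u).
Proof.
move=> h; have c0 := cos_p_gt0 u h.
have dt := dtan u h.
rewrite /X /X1; apply: is_derive_eq; rewrite /GRing.scale /=.
by field; rewrite !gt_eqF.
Qed.

Lemma dX1 u : I0 u -> is_derive u (1:R) X1 (X2 u).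
Proof.
move=> h; have c0 := cos_p_gt0 u h.
have dt := dtan u h; have dc := dcos u.
have dc2 : is_derive u (1:R) (fun z => (cos (p z) ^+ 2)^-1)
   (- (cos (p u) ^+ 2) ^-2 *: (2 * cos (p u) * (- sin (p u) * a))).
  apply: is_deriveV; first by rewrite expf_neq0 // gt_eqF.
  by apply: is_derive_eq; rewrite /GRing.scale /=; ring.
rewrite /X1 /X2; apply: is_derive_eq; rewrite /GRing.scale /= /tan.
by field; rewrite !gt_eqF.
Qed.


Lemma X2_ge0 u : I0 u -> 0 <= X2 u.
Proof.
move=> h; have c0 := cos_p_gt0 u h; have a0 := a_gt0; have r0 := rb_gt0.
have := h; move/I0P => hP.
have := @key_ineq R (p u) th hP (introT andP (conj th_gt th_lt)).
have -> : p u - th = a * u by rewrite /p; ring.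
move=> k; rewrite /X2.
have -> : 1 + a * u * tan (p u) = (cos (p u) + a * u * sin (p u)) / cos (p u).
  by rewrite /tan; field; rewrite gt_eqF.
apply: mulr_ge0.
  have c2 : 0 < cos (p u) ^+ 2 by rewrite exprn_gt0.
  apply: mulr_ge0; first by apply: mulr_ge0; [apply: divr_ge0; apply: ltW|apply: ltW].
  by apply: divr_ge0; [apply: mulr_ge0; [|apply: ltW]|apply: ltW].
by apply: divr_ge0; [|apply: ltW].
Qed.

Lemma I0_itv u : I0 u = (u \in `]L0, R0[).
Proof. by rewrite in_itv. Qed.

Lemma near_I0 u : I0 u -> \forall w \near u, I0 w.
Proof.
rewrite I0_itv => h; have := near_in_itv h.
by apply: filterS => w; rewrite I0_itv.
Qed.

Lemma DX u : I0 u -> 'D_1 X u = X1 u.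
Proof. by move=> h; rewrite (@derive_val _ _ _ _ _ _ _ (dX u h)). Qed.

Lemma DX_near u : I0 u -> \forall w \near u, 'D_1 X w = X1 w.
Proof. by move=> h; apply: filterS (near_I0 u h) => w; apply: DX. Qed.

Lemma DDX u : I0 u -> 'D_1 ('D_1 X) u = X2 u.
Proof.
move=> h; rewrite (near_eq_derive _ (DX_near u h)).
by rewrite (@derive_val _ _ _ _ _ _ _ (dX1 u h)).
Qed.

Lemma derivable_DX u : I0 u -> derivable ('D_1 X) u 1.
Proof.
move=> h; apply: (near_eq_derivable _ (@ex_derive _ _ _ _ _ _ _ (dX1 u h))).
by apply: filterS (DX_near u h) => w ->.
Qed.

Lemma cont_X u : I0 u -> {for u, continuous X}.
Proof.
move=> h; exact/differentiable_continuous/derivable1_diffP/(@ex_derive _ _ _ _ _ _ _ (dX u h)).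
Qed.

Local Open Scope convex_scope.
Lemma X_conv_le x y (l : {i01 R}) : I0 x -> I0 y -> x <= y ->
  X ((x : R^o) <| l |> y) <= (X x : R^o) <| l |> X y.
Proof.
move=> hx hy xy.
have between z : x <= z <= y -> I0 z.
  move: hx hy; rewrite /I0 => /andP[h1 h2] /andP[h3 h4] /andP[h5 h6].
  apply/andP; split; [exact: (lt_le_trans h1 h5)|exact: (le_lt_trans h6 h4)].
apply: (@second_derivative_convex R X x y); last exact: xy.
- move=> z /andP[h1 h2].
  have hz : I0 z by apply: between; rewrite !ltW.
  by rewrite (DDX z hz); apply: X2_ge0.
- exact/cvg_at_left_filter/(cont_X y hy).
- exact/cvg_at_right_filter/(cont_X x hx).
- move=> z; rewrite in_itv /= => /andP[h1 h2].
  have hz : I0 z by apply: between; rewrite !ltW.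
  exact: (@ex_derive _ _ _ _ _ _ _ (dX z hz)).
- move=> z; rewrite in_itv /= => /andP[h1 h2].
  have hz : I0 z by apply: between; rewrite !ltW.
  exact: (derivable_DX z hz).
Qed.

Lemma X_conv x y (l : {i01 R}) : I0 x -> I0 y ->
  X ((x : R^o) <| l |> y) <= (X x : R^o) <| l |> X y.
Proof.
move=> hx hy; have [xy|/ltW yx] := leP x y; first exact: X_conv_le.
by rewrite convC [leRHS]convC; apply: X_conv_le.
Qed.
Local Close Scope convex_scope.


Definition k := xi ^+ 2 * t / (2 * v).
Lemma k_ge0 : 0 <= k.
Proof. by rewrite /k divr_ge0 // ?mulr_ge0 ?exprn_ge0 // ?mulr_ge0 // ltW. Qed.

Definition S u := I0 u && (k * X u < 1).
Definition F x := x / (1 - k * x).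

Lemma den_eq t' u : sin (a * u) != 0 ->
  Xi_den xi rho u t' tau = xi * cos (p u) / sin (a * u) - xi ^+ 2 * t' * u / 2.
Proof.
move=> s0; rewrite /Xi_den /cot Xi_argE cos_pE -/rb.
by field.
Qed.

Lemma XiE t' u : I0 u -> 1 - (xi ^+ 2 * t' / (2 * v)) * X u != 0 ->
  Xi v xi rho u t' tau = X u / (1 - (xi ^+ 2 * t' / (2 * v)) * X u).
Proof.
move=> h w0.
have [->|u0] := eqVneq u 0; first by rewrite /Xi eqxx X0 mul0r.
have s0 := sin_au_ne0 u h u0; have c0 := cos_p_gt0 u h.
have hD : Xi_den xi rho u t' tau =
   xi * cos (p u) / sin (a * u) * (1 - (xi ^+ 2 * t' / (2 * v)) * X u).
  rewrite den_eq // X_alt //; field.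
  by rewrite s0 (gt_eqF c0) (gt_eqF hxi) (gt_eqF hv).
rewrite /Xi (negbTE u0) hD.
move: w0; set w := 1 - _ => w0.
rewrite X_alt //; field.
by rewrite w0 s0 (gt_eqF c0) (gt_eqF hxi).
Qed.

Lemma XiE0 u : I0 u -> Xi v xi rho u 0 tau = X u.
Proof.
move=> h; rewrite XiE //; last by rewrite mulr0 mul0r mul0r subr0 oner_neq0.
by rewrite mulr0 mul0r mul0r subr0 divr1.
Qed.

Lemma XiEt u : S u -> Xi v xi rho u t tau = F (X u).
Proof.
move=> /andP[h k1]; rewrite XiE //; rewrite -/k ?subr_eq0 ?gt_eqF //.
Qed.

Lemma S_sub_K u : S u -> K_set v xi rho t tau u.
Proof.
move=> hS; have := hS => /andP[h k1]; split.
  have [->|u0] := eqVneq u 0; first by left.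
  right; have s0 := sin_au_ne0 u h u0; have c0 := cos_p_gt0 u h.
  split; first by rewrite Xi_argE.
  rewrite den_eq // !(mulr0, mul0r, subr0).
  by rewrite mulf_neq0 ?invr_eq0 // mulf_neq0 // gt_eqF.
have [->|t0] := eqVneq t 0; first by left.
right; rewrite XiE0 //.
have t0' : 0 < t by rewrite lt_neqAle eq_sym t0 ht.
have kp : 0 < k by rewrite /k divr_gt0 // ?mulr_gt0 // exprn_gt0.
have -> : 2 * v / (xi ^+ 2 * t) = k^-1 by rewrite /k invf_div.
by rewrite -(ltr_pM2l kp) mulfV ?gt_eqF.
Qed.

Lemma K_S u : K_set v xi rho t tau u -> I0 u -> S u.
Proof.
move=> [_ ht'] h; apply/andP; split => //.
case: ht' => [t0|]; first by rewrite /k t0 mulr0 mul0r mul0r ltr01.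
rewrite XiE0 // => hX.
have [t0|t0] := eqVneq t 0; first by rewrite /k t0 mulr0 mul0r mul0r ltr01.
have t0' : 0 < t by rewrite lt_neqAle eq_sym t0 ht.
have kp : 0 < k by rewrite /k divr_gt0 // ?mulr_gt0 // exprn_gt0.
move: hX; have -> : 2 * v / (xi ^+ 2 * t) = k^-1 by rewrite /k invf_div.
by rewrite -(ltr_pM2l kp) mulfV ?gt_eqF.
Qed.

Lemma K_cos u : K_set v xi rho t tau u -> cos (p u) != 0.
Proof.
move=> [[->|[s0 d0]] _].
  by rewrite /p mulr0 add0r cos_th gt_eqF // rb_gt0.
move: d0; rewrite Xi_argE in s0; rewrite den_eq // !(mulr0, mul0r, subr0).
by apply: contra => /eqP ->; rewrite mulr0 mul0r.
Qed.

Lemma p_L0 : p L0 = - (pi / 2).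
Proof. by rewrite /p /L0; field; rewrite gt_eqF // a_gt0. Qed.
Lemma p_R0 : p R0 = pi / 2.
Proof. by rewrite /p /R0; field; rewrite gt_eqF // a_gt0. Qed.

Lemma S_interval : is_interval [set u | S u].
Proof.
move=> x y /= /andP[hx kx] /andP[hy ky] z /andP[xz zy].
have hz : I0 z.
  move: hx hy; rewrite /I0 => /andP[h1 h2] /andP[h3 h4].
  apply/andP; split; [exact: (lt_le_trans h1 xz)|exact: (le_lt_trans zy h4)].
apply/andP; split => //.
have [exy|nxy] := eqVneq x y.
  by move: xz zy; rewrite exy => h1 h2; have -> : z = y by apply/eqP; rewrite eq_le h1 h2.
have xy : x < y by rewrite lt_neqAle nxy (le_trans xz zy).
pose l := (y - z) / (y - x).
have yx0 : 0 < y - x by rewrite subr_gt0.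
have l0 : 0 <= l by rewrite /l divr_ge0 // ?subr_ge0 // ltW.
have l1 : l <= 1 by rewrite /l ler_pdivrMr // mul1r lerD2l lerN2.
have := X_conv x y (Itv01 l0 l1) hx hy; rewrite !convRE /= /unstable.onem.
have -> : l * x + (1 - l) * y = z by rewrite /l; field; rewrite gt_eqF.
move=> hc; have k0 := k_ge0.
have : k * X z <= k * (l * X x + (1 - l) * X y) by rewrite ler_wpM2l.
have : (1 - l) * (k * X y) <= (1 - l) * 1 by rewrite ler_wpM2l ?subr_ge0 // ltW.
have : l * (k * X x) <= l * 1 by rewrite ler_wpM2l // ltW.
have : 0 <= (1 - l) by rewrite subr_ge0.
move=> *.
have [l0'|l0'] := eqVneq l 0.
  by move: hc; rewrite l0' !mul0r subr0 !mul1r add0r => hc; apply: (le_lt_trans _ ky); rewrite ler_wpM2l.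
have lp : 0 < l by rewrite lt_neqAle eq_sym l0' l0.
have : l * (k * X x) < l * 1 by rewrite ltr_pM2l.
nra.
Qed.

Lemma Ktt_eq : K_tt v xi rho t tau = [set u | S u].
Proof.
apply/seteqP; split; last first.
  move=> u Su; exists [set u | S u] => //; split => //.
  - by apply/andP; split; [exact: I0_0|rewrite X0 mulr0 ltr01].
  - by move=> w; apply: S_sub_K.
  - by apply/connected_intervalP; exact: S_interval.
move=> y [C [C0 CK /connected_intervalP Ci] Cy].
apply: K_S; first exact: CK.
have a0 := a_gt0; have t1 := th_gt; have t2 := th_lt.
have pi0 : 0 < pi :> R := pi_gt0 R.
rewrite /I0; apply/andP; split; rewrite ltNge; apply/negP => hy.
- have hL : C L0.
    apply: (Ci y 0) => //; rewrite hy /= /L0 ler_pdivrMr // mul0r; lra.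
  by move: (K_cos _ (CK _ hL)); rewrite p_L0 cosN cos_pihalf eqxx.
- have hR : C R0.
    apply: (Ci 0 y) => //; rewrite hy andbT /R0 ler_pdivlMr // mul0r; lra.
  by move: (K_cos _ (CK _ hR)); rewrite p_R0 cos_pihalf eqxx.
Qed.


Lemma F_mono x y : 0 <= x -> x <= y -> k * y < 1 -> F x <= F y.
Proof.
move=> x0 xy ky; have k0 := k_ge0.
have kx : k * x <= k * y by rewrite ler_wpM2l.
have A0 : 0 < 1 - k * x by rewrite subr_gt0; apply: le_lt_trans ky.
have B0 : 0 < 1 - k * y by rewrite subr_gt0.
rewrite -subr_ge0.
have -> : F y - F x = (y - x) / ((1 - k * x) * (1 - k * y)).
  by rewrite /F; field; rewrite !gt_eqF.
by apply: divr_ge0; [rewrite subr_ge0|apply: ltW; apply: mulr_gt0].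
Qed.

Lemma F_conv x y l : 0 <= x -> 0 <= y -> k * x < 1 -> k * y < 1 ->
  0 <= l -> l <= 1 ->
  F (l * x + (1 - l) * y) <= l * F x + (1 - l) * F y.
Proof.
move=> x0 y0 kx ky l0 l1; have k0 := k_ge0.
have A0 : 0 < 1 - k * x by rewrite subr_gt0.
have B0 : 0 < 1 - k * y by rewrite subr_gt0.
have C0 : 0 < 1 - k * (l * x + (1 - l) * y).
  have -> : 1 - k * (l * x + (1 - l) * y) = l * (1 - k * x) + (1 - l) * (1 - k * y) by ring.
  have [->|lp] := eqVneq l 0; first by rewrite mul0r add0r subr0 mul1r.
  have lp' : 0 < l by rewrite lt_neqAle eq_sym lp l0.
  have t1 : 0 < l * (1 - k * x) by apply: mulr_gt0.
  have t2 : 0 <= (1 - l) * (1 - k * y) by apply: mulr_ge0; [rewrite subr_ge0|apply: ltW].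
  lra.
rewrite -subr_ge0.
have -> : l * F x + (1 - l) * F y - F (l * x + (1 - l) * y) =
  l * (1 - l) * k * (x - y) ^+ 2 /
   ((1 - k * x) * (1 - k * y) * (1 - k * (l * x + (1 - l) * y))).
  by rewrite /F; field; rewrite !gt_eqF.
apply: divr_ge0; last by apply: ltW; rewrite !mulr_gt0.
apply: mulr_ge0; last exact: sqr_ge0.
apply: mulr_ge0 => //; apply: mulr_ge0 => //.
by rewrite subr_ge0.
Qed.

Lemma inS u : u \in [set w | S w] -> S u.
Proof. by rewrite in_setE. Qed.

Local Open Scope convex_scope.
Lemma h_conv : convex_function [set u | S u] (fun u => Xi v xi rho u t tau).
Proof.
move=> l x y /inS Sx /inS Sy.
have Sz : S ((x : R^o) <| l |> y).
  have [xy|/ltW yx] := leP x y.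
    have := convR_itv l xy; rewrite in_itv /= => hz.
    exact: (S_interval _ _ Sx Sy _ hz).
  apply: (S_interval _ _ Sy Sx).
  have l0 : 0 <= l%:num by [].
  have l1 : l%:num <= 1 by [].
  rewrite convRE /unstable.onem; apply/andP; split; nra.
rewrite !XiEt //.
move: Sx Sy => /andP[hx kx] /andP[hy ky].
have X0x := X_ge0 x hx; have X0y := X_ge0 y hy.
have hl0 : 0 <= l%:num by [].
have hl1 : l%:num <= 1 by [].
apply: (@le_trans _ _ (F (l%:num * X x + (1 - l%:num) * X y))).
  apply: F_mono.
  - by move: Sz => /andP[hz _]; apply: X_ge0.
  - by have := X_conv x y l hx hy; rewrite !convRE.
  - have k0 := k_ge0.
    have -> : k * (l%:num * X x + (1 - l%:num) * X y) =
       l%:num * (k * X x) + (1 - l%:num) * (k * X y) by ring.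
    have e1 : l%:num * (k * X x) <= l%:num * 1 by rewrite ler_wpM2l // ltW.
    have e2 : (1 - l%:num) * (k * X y) <= (1 - l%:num) * 1.
      by rewrite ler_wpM2l ?subr_ge0 // ltW.
    have [l0|l0] := eqVneq (l%:num) 0.
      by rewrite l0 !mul0r add0r subr0 !mul1r.
    have lp : 0 < l%:num by rewrite lt_neqAle eq_sym l0.
    have e3 : l%:num * (k * X x) < l%:num * 1 by rewrite ltr_pM2l.
    lra.
rewrite convRE /=.
exact: F_conv.
Qed.
Local Close Scope convex_scope.

Lemma near_S u : S u -> \forall w \near u, S w.
Proof.
move=> /andP[h ku].
have cX : (fun w => k * X w) @ u --> k * X u.
  by apply: cvgMr; exact: cont_X.
near=> w; apply/andP; split.
  by near: w; exact: near_I0.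
by near: w; exact: (cvgr_lt _ cX 1 ku).
Unshelve. all: by end_near. Qed.

Lemma interior_S : interior [set u | S u] = [set u | S u].
Proof.
apply/seteqP; split; first exact: interior_subset.
by move=> u Su; apply: near_S.
Qed.

Lemma dG u : S u -> is_derive u (1:R) (fun w => F (X w)) (X1 u / (1 - k * X u) ^+ 2).
Proof.
move=> /andP[h ku].
have dx := dX u h.
have w0 : 1 - k * X u != 0 by rewrite subr_eq0 gt_eqF.
have dw : is_derive u (1:R) (fun w => 1 - k * X w) (- (k * X1 u)).
  by apply: is_derive_eq; rewrite /GRing.scale /=; ring.
have dV := @is_deriveV R (fun w => 1 - k * X w) u _ 1 w0 dw.
rewrite /F; apply: is_derive_eq; rewrite /GRing.scale /=.
by field.
Qed.

Lemma h_near u : S u -> \forall w \near u, Xi v xi rho w t tau = F (X w).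
Proof. by move=> Su; apply: filterS (near_S u Su) => w; apply: XiEt. Qed.

Lemma h_derivable u : S u -> derivable (fun w => Xi v xi rho w t tau) u 1.
Proof.
move=> Su; apply: (near_eq_derivable _ (@ex_derive _ _ _ _ _ _ _ (dG u Su))).
by apply: filterS (h_near u Su) => w ->.
Qed.

Lemma h_derive u : S u ->
  derive1 (fun w => Xi v xi rho w t tau) u = X1 u / (1 - k * X u) ^+ 2.
Proof.
move=> Su; rewrite derive1E (near_eq_derive _ (h_near u Su)).
by rewrite (@derive_val _ _ _ _ _ _ _ (dG u Su)).
Qed.

Lemma usin_gt0' u : -(pi/2) <= p u <= pi/2 -> u != 0 -> 0 < u * sin (a * u).
Proof.
move=> /andP[h1 h2] u0.
have pi0 : 0 < pi :> R := pi_gt0 R.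
have t1 := th_gt; have t2 := th_lt; have a0 := a_gt0.
have [ul|ug] := ltP u 0.
- have -> : u * sin (a * u) = (- u) * sin (- (a * u)) by rewrite sinN; ring.
  apply: mulr_gt0; first lra.
  apply: sin_gt0_pi; apply/andP; split; rewrite /p in h1 h2; nra.
- have ug' : 0 < u by rewrite lt_neqAle eq_sym u0.
  apply: mulr_gt0 => //.
  apply: sin_gt0_pi; apply/andP; split; rewrite /p in h1 h2; nra.
Qed.

Lemma Xi_ge_X u : S u -> X u <= Xi v xi rho u t tau.
Proof.
move=> Su; have := Su => /andP[h ku]; rewrite XiEt // /F.
have k0 := k_ge0; have X0' := X_ge0 u h.
have w0 : 0 < 1 - k * X u by rewrite subr_gt0.
have w1 : 1 - k * X u <= 1 by rewrite lerBlDr lerDl mulr_ge0.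
by rewrite ler_pdivlMr // ler_piMr.
Qed.

Lemma lower u : S u -> Xi v xi rho u t tau <= u * (X1 u / (1 - k * X u) ^+ 2).
Proof.
move=> Su; have := Su => /andP[h ku]; rewrite XiEt // /F.
have k0 := k_ge0; have X0' := X_ge0 u h; have c0 := cos_p_gt0 u h.
have a0 := a_gt0; have r0 := rb_gt0.
have hD : u * X1 u - X u = v / xi * rb * a * u ^+ 2 / cos (p u) ^+ 2.
  by rewrite /X1 /X; field; rewrite !gt_eqF.
have D0 : 0 <= v / xi * rb * a * u ^+ 2 / cos (p u) ^+ 2.
  apply: divr_ge0; last by rewrite exprn_ge0 // ltW.
  apply: mulr_ge0; last exact: sqr_ge0.
  by apply: mulr_ge0; [apply: mulr_ge0; [apply: divr_ge0; apply: ltW|apply: ltW]|apply: ltW].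
move: hD D0; set D := v / xi * rb * a * u ^+ 2 / cos (p u) ^+ 2 => hD D0.
have w0 : 0 < 1 - k * X u by rewrite subr_gt0.
have w1 : 0 <= k * X u by rewrite mulr_ge0.
move: w0 w1; set w := 1 - k * X u => w0 w1.
rewrite -subr_ge0.
have -> : u * (X1 u / w ^+ 2) - X u / w = (D + X u * (k * X u)) / w ^+ 2.
  rewrite -hD /w; field; by rewrite gt_eqF.
apply: divr_ge0; last by rewrite exprn_ge0 // ltW.
by rewrite addr_ge0 // mulr_ge0.
Qed.

Lemma cont_of (f : R -> R) (x df : R) : is_derive x (1:R) f df -> {for x, continuous f}.
Proof. by move=> H; exact/differentiable_continuous/derivable1_diffP/(@ex_derive _ _ _ _ _ _ _ H). Qed.

Definition Nn w := v / xi * (w * (rb * sin (p w) - rho * cos (p w))).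

Lemma dNn w : is_derive w (1:R) Nn
  (v / xi * ((rb * sin (p w) - rho * cos (p w)) +
     w * (rb * (cos (p w) * a) - rho * (- sin (p w) * a)))).
Proof.
have ds := dsin w; have dc := dcos w.
rewrite /Nn; apply: is_derive_eq; rewrite /GRing.scale /=; ring.
Qed.

Lemma X_Nn w : I0 w -> X w = Nn w / cos (p w).
Proof.
move=> h; have c0 := cos_p_gt0 w h.
rewrite X_alt // /Nn sin_au; field; by rewrite !gt_eqF.
Qed.

Lemma blow (u_ : R^nat) b : (forall n, S (u_ n)) -> u_ @ \oo --> b -> ~ S b ->
  (fun n => Xi v xi rho (u_ n) t tau) @ \oo --> +oo.
Proof.
move=> Su cu nSb.
have I0u n : I0 (u_ n) by case/andP: (Su n).
apply/cvgryPge => A.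
pose M := `|A| + 1.
have M1 : 1 <= M by rewrite /M lerDr.
have MA : A <= M by rewrite /M; have := ler_norm A; lra.
suff: \forall n \near \oo, M <= Xi v xi rho (u_ n) t tau.
  by apply: filterS => n; apply: le_trans.
have k0 := k_ge0.
have [hb|hb] := boolP (I0 b).
- have kb : 1 <= k * X b.
    by rewrite leNgt; apply/negP => h; apply: nSb; apply/andP.
  have cXu : X (u_ n) @[n --> \oo] --> X b.
    exact: (continuous_cvg _ (cont_X b hb) cu).
  have cY : k * X (u_ n) @[n --> \oo] --> k * X b by apply: cvgMr.
  have kp : 0 < k.
    rewrite lt_neqAle eq_sym k0 andbT; apply/eqP => k00.
    by move: kb; rewrite k00 mul0r ler10.
  pose e := (2 * k * M)^-1.
  have e0 : 0 < e.
    rewrite /e invr_gt0; apply: mulr_gt0; [exact: mulr_gt0|lra].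
  have ev1 : \forall n \near \oo, 1/2 < k * X (u_ n).
    by apply: (cvgr_gt _ cY); lra.
  have ev2 : \forall n \near \oo, 1 - e < k * X (u_ n).
    by apply: (cvgr_gt _ cY); lra.
  near=> n.
  have h1 : 1/2 < k * X (u_ n) by near: n; exact: ev1.
  have h2 : 1 - e < k * X (u_ n) by near: n; exact: ev2.
  have h3 : k * X (u_ n) < 1 by case/andP: (Su n).
  rewrite XiEt // /F.
  have w0 : 0 < 1 - k * X (u_ n) by rewrite subr_gt0.
  rewrite ler_pdivlMr //.
  have hMe : M * e = (2 * k)^-1 by rewrite /e; field; rewrite !gt_eqF //; lra.
  have hX : (2 * k)^-1 < X (u_ n).
    rewrite -(ltr_pM2l (_ : 0 < 2 * k)); last by rewrite mulr_gt0.
    rewrite mulfV; last by rewrite gt_eqF // mulr_gt0.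
    lra.
  have : M * (1 - k * X (u_ n)) <= M * e by rewrite ler_wpM2l //; lra.
  lra.
-
  have cp : p (u_ n) @[n --> \oo] --> p b.
    apply: (continuous_cvg _ _ cu); exact: (cont_of _ _ _ (dp b)).
  have pb1 : -(pi/2) <= p b.
    rewrite leNgt; apply/negP => hlt.
    have [n Hn] := filter_ex (cvgr_lt _ cp _ hlt).
    by move: (I0u n) => /I0P /andP[h1 _]; move: Hn => /=; lra.
  have pb2 : p b <= pi/2.
    rewrite leNgt; apply/negP => hlt.
    have [n Hn] := filter_ex (cvgr_gt _ cp _ hlt).
    by move: (I0u n) => /I0P /andP[_ h2]; move: Hn => /=; lra.
  have cb : cos (p b) = 0.
    have : ~~ (-(pi/2) < p b < pi/2) by apply/negP => /I0P hI; move/negP: hb.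
    rewrite negb_and -!leNgt => /orP[h|h].
      have -> : p b = -(pi/2) by apply/eqP; rewrite eq_le h pb1.
      by rewrite cosN cos_pihalf.
    have -> : p b = pi/2 by apply/eqP; rewrite eq_le h pb2.
    by rewrite cos_pihalf.
  have b0 : b != 0.
    apply/negP => /eqP b00; move/negP: hb; apply; rewrite b00; exact: I0_0.
  have Nb : 0 < Nn b.
    have := usin_gt0' b (introT andP (conj pb1 pb2)) b0.
    rewrite sin_au /Nn => hh; apply: mulr_gt0 => //.
    by apply: divr_gt0.
  have cN : Nn (u_ n) @[n --> \oo] --> Nn b.
    apply: (continuous_cvg _ _ cu); exact: (cont_of _ _ _ (dNn b)).
  have cC : cos (p (u_ n)) @[n --> \oo] --> cos (p b).
    apply: (@continuous_cvg _ _ _ _ _ u_ (fun w => cos (p w)) _ _ cu); exact: (cont_of _ _ _ (dcos b)).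
  have ev1 : \forall n \near \oo, Nn b / 2 < Nn (u_ n).
    by apply: (cvgr_gt _ cN); lra.
  have ev2 : \forall n \near \oo, cos (p (u_ n)) < Nn b / (2 * M).
    apply: (cvgr_lt _ cC); rewrite cb; apply: divr_gt0 => //; lra.
  near=> n.
  have h1 : Nn b / 2 < Nn (u_ n) by near: n; exact: ev1.
  have h2 : cos (p (u_ n)) < Nn b / (2 * M) by near: n; exact: ev2.
  have c0 := cos_p_gt0 _ (I0u n).
  apply: le_trans (Xi_ge_X _ (Su n)).
  rewrite X_Nn // ler_pdivlMr //.
  have : M * cos (p (u_ n)) <= M * (Nn b / (2 * M)) by rewrite ler_wpM2l //; lra.
  have -> : M * (Nn b / (2 * M)) = Nn b / 2 by field; rewrite gt_eqF //; lra.
  lra.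
Unshelve. all: by end_near. Qed.

Lemma dblow (u_ : R^nat) b : (forall n, S (u_ n)) -> u_ @ \oo --> b -> ~ S b ->
  (fun n => `| derive1 (fun w => Xi v xi rho w t tau) (u_ n) |) @ \oo --> +oo.
Proof.
move=> Su cu nSb.
apply/cvgryPge => A.
pose M := `|b| + 1.
have M0 : 0 < M by rewrite /M ltr_pwDr.
have ev1 : \forall n \near \oo, `|u_ n| < M.
  by apply: (cvgr_lt _ (cvg_norm cu)); rewrite /M ltrDl.
have ev2 := (cvgryPge _).1 (blow u_ b Su cu nSb) (A * M).
near=> n.
have h1 : `|u_ n| < M by near: n; exact: ev1.
have h2 : A * M <= Xi v xi rho (u_ n) t tau by near: n; exact: ev2.
rewrite h_derive //.
have h3 := lower (u_ n) (Su n).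
set D := X1 (u_ n) / _ in h3 *.
have h4 : u_ n * D <= `|u_ n| * `|D| by rewrite -normrM ler_norm.
have h5 : `|u_ n| * `|D| <= M * `|D| by rewrite ler_wpM2r // ltW.
have : A * M <= M * `|D| by lra.
by rewrite mulrC ler_pM2l.
Unshelve. all: by end_near. Qed.

Lemma main : convex_function (K_tt v xi rho t tau) (fun u => Xi v xi rho u t tau) /\
  essentially_smooth (K_tt v xi rho t tau) (fun u => Xi v xi rho u t tau).
Proof.
rewrite Ktt_eq; split; first exact: h_conv.
rewrite /essentially_smooth interior_S; split.
- by exists 0; rewrite /= /S I0_0 X0 mulr0 ltr01.
- by move=> x Sx; apply: h_derivable.
- by move=> u_ b Hu cu [_ nb]; exact: (dblow u_ b Hu cu nb).
Qed.

End Main.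

Theorem lemma5p8 (R : realType) (v xi rho : R)
  (hv : 0 < v) (hxi : 0 < xi) (hrho1 : -1 < rho) (hrho2 : rho < 1)
  (t tau : R) (ht : 0 <= t) (htau : 0 < tau) :
  convex_function (K_tt v xi rho t tau) (fun u => Xi v xi rho u t tau) /\
  essentially_smooth (K_tt v xi rho t tau) (fun u => Xi v xi rho u t tau).
Proof. exact: main. Qed.
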